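(* Let $V,W$ be finite-dimensional real vector spaces, let $\rho\colon\mathrm{GL}(V)\to\mathrm{GL}(W)$ be a representation, and let $\mathcal{R}=(\mathcal{R}^0,\mathcal{R}^1,\dots)$ be a sequence in $\mathscr{P}(V;W)$ whose minimal polynomial $P_{\min}(\mathcal{R})$ has degree $k$. If $\mathrm{Kern}(\mathrm{Eval}_{\mathcal{R}})$ is an ideal of $\mathscr{P}(V)[\lambda]$, then $G(\mathcal{R}^{\le k})=G(\mathcal{R}^{\le k+1})$.
   Context: $\mathscr{P}(V)$ and $\mathscr{P}(V;W)$ denote the real-valued and $W$-valued polynomial functions on $V$. The degree $k$ of $P_{\min}(\mathcal{R})$ is the smallest integer $k\ge0$ such that $\mathcal{R}^0(X),\dots,\mathcal{R}^k(X)$ are linearly dependent for every $X\in V$. Then $P_{\min}(\mathcal{R})=\lambda^k+\sum_{i=1}^k a_i\lambda^{k-i}$, where $a_i$ are the unique rational functions with $\mathcal{R}^k=-\sum_{i=1}^k a_i\mathcal{R}^{k-i}$. $\mathrm{Eval}_{\mathcal{R}}\colon\mathscr{P}(V)[\lambda]\to\mathscr{P}(V;W)$ is the unique $\mathscr{P}(V)$-module homomorphism with $\lambda^i\mapsto\mathcal{R}^i$. $\mathrm{GL}(V)$ acts on $W$-valued functions by $(F\cdot\mathcal{R}^i)(X)=\rho(F)(\mathcal{R}^i(F^{-1}X))$. For $m\ge0$, $G(\mathcal{R}^{\le m})=\{F\in\mathrm{GL}(V): F\cdot\mathcal{R}^i=\mathcal{R}^i\text{ for }i=0,\dots,m\}$.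 *)

(* Defs.v *)
From HB Require Import structures.
From mathcomp Require Import all_boot all_algebra.
From mathcomp Require Import reals.
From mathcomp Require Import mpoly.

Set Implicit Arguments.
Unset Strict Implicit.
Unset Printing Implicit Defensive.

Import GRing.Theory Num.Theory.
Local Open Scope ring_scope.

(* V = 'cV[R]_n, W = 'cV[R]_m (coordinates chosen once and for all). *)

Definition peval (R : realType) (n : nat) (p : {mpoly R[n]}) (X : 'cV[R]_n) : R :=
  p.@[fun i => X i 0].

Definition is_polyfun (R : realType) (n m : nat) (f : 'cV[R]_n -> 'cV[R]_m) : Prop :=
  exists P : 'I_m -> {mpoly R[n]}, forall X j, f X j 0 = peval (P j) X.

Definition dep_upto (R : realType) (n m : nat) (Rs : nat -> 'cV[R]_n -> 'cV[R]_m)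
  (j : nat) (X : 'cV[R]_n) : bool :=
  ~~ free (mkseq (fun i => Rs i X) j.+1).

(* deg P_min(Rs) = k : k is the smallest integer such that R^0(X),...,R^k(X)
   are linearly dependent for every X. *)
Definition deg_Pmin (R : realType) (n m : nat) (Rs : nat -> 'cV[R]_n -> 'cV[R]_m)
  (k : nat) : Prop :=
  (forall X, dep_upto Rs k X) /\
  (forall j, (j < k)%N -> ~ (forall X, dep_upto Rs j X)).

Definition EvalR (R : realType) (n m : nat) (Rs : nat -> 'cV[R]_n -> 'cV[R]_m)
  (p : {poly {mpoly R[n]}}) : 'cV[R]_n -> 'cV[R]_m :=
  fun X => \sum_(i < size p) peval p`_i X *: Rs i X.

Definition in_KernEval (R : realType) (n m : nat) (Rs : nat -> 'cV[R]_n -> 'cV[R]_m)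
  (p : {poly {mpoly R[n]}}) : Prop :=
  forall X, EvalR Rs p X = 0.

(* Kern(Eval_R) is an ideal of P(V)[lambda] (it is always an additive subgroup;
   we require it to be closed under multiplication by arbitrary elements). *)
Definition KernEval_is_ideal (R : realType) (n m : nat)
  (Rs : nat -> 'cV[R]_n -> 'cV[R]_m) : Prop :=
  (forall p q, in_KernEval Rs p -> in_KernEval Rs q -> in_KernEval Rs (p + q)) /\
  in_KernEval Rs 0 /\
  (forall a p, in_KernEval Rs p -> in_KernEval Rs (a * p)).

Definition is_rep (R : realType) (n m : nat) (rho : 'M[R]_n -> 'M[R]_m) : Prop :=
  (forall F, F \in unitmx -> rho F \in unitmx) /\
  rho 1%:M = 1%:M /\
  (forall F G, F \in unitmx -> G \in unitmx -> rho (F *m G) = rho F *m rho G).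

Definition actGL (R : realType) (n m : nat) (rho : 'M[R]_n -> 'M[R]_m)
  (F : 'M[R]_n) (f : 'cV[R]_n -> 'cV[R]_m) : 'cV[R]_n -> 'cV[R]_m :=
  fun X => rho F *m f (invmx F *m X).

Definition in_stab (R : realType) (n m : nat) (rho : 'M[R]_n -> 'M[R]_m)
  (Rs : nat -> 'cV[R]_n -> 'cV[R]_m) (k : nat) (F : 'M[R]_n) : Prop :=
  F \in unitmx /\ (forall i, (i <= k)%N -> actGL rho F (Rs i) = Rs i).

(* Main.v *)
Require Import Defs.
From HB Require Import structures.
From mathcomp Require Import all_boot all_algebra.
From mathcomp Require Import reals.
From mathcomp Require Import mpoly.
From Stdlib Require Import Classical ClassicalEpsilon FunctionalExtensionality.

Set Implicit Arguments.
Unset Strict Implicit.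
Unset Printing Implicit Defensive.
Import GRing.Theory Num.Theory.
Local Open Scope ring_scope.


Lemma poly_zero_fun (R : realType) (q : {poly R}) :
  (forall t, q.[t] = 0) -> q = 0.
Proof.
move=> H; apply/eqP; apply/negPn/negP => nz.
have h1 : all (root q) [seq i%:R | i <- iota 0 (size q)].
  by apply/allP => x /mapP [i _ ->]; rewrite /root H.
have h2 : uniq [seq (i%:R : R) | i <- iota 0 (size q)].
  rewrite map_inj_uniq ?iota_uniq //.
  by move=> i j /eqP; rewrite eqr_nat => /eqP.
by have := max_poly_roots nz h1 h2; rewrite size_map size_iota ltnn.
Qed.

Lemma det_inj (R : realType) k (A : 'M[R]_k) (v : 'cV[R]_k) :
  \det A != 0 -> A *m v = 0 -> v = 0.
Proof.
move=> dA Av.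
have uA : A \in unitmx by rewrite unitmxE unitfE.
by rewrite -(mulKmx uA v) Av mulmx0.
Qed.

Definition lp (R : realType) n (p : {mpoly R[n]}) (a b : 'cV[R]_n) : {poly R} :=
  \sum_(m <- msupp p) (p@_m)%:P * \prod_(i < n) ((a i 0)%:P + (b i 0)%:P * 'X) ^+ m i.

Lemma lpE (R : realType) n (p : {mpoly R[n]}) a b t :
  (lp p a b).[t] = peval p (a + t *: b).
Proof.
rewrite /lp /peval mevalE horner_sum; apply: eq_bigr => mm _.
rewrite hornerM hornerC horner_prod; congr (_ * _); apply: eq_bigr => i _.
by rewrite horner_exp hornerD hornerM hornerX !hornerC !mxE mulrC.
Qed.

Lemma EvalR_widen (R : realType) n m (Rs : nat -> 'cV[R]_n -> 'cV[R]_m) (p : {poly {mpoly R[n]}}) X N :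
  (size p <= N)%N ->
  EvalR Rs p X = \sum_(i < N) peval p`_i X *: Rs i X.
Proof.
move=> hN; rewrite /EvalR (big_ord_widen N (fun i => peval p`_i X *: Rs i X) hN).
rewrite big_mkcond /=; apply: eq_bigr => i _.
case: ltnP => // hi.
by rewrite nth_default // /peval meval0 scale0r.
Qed.

Lemma free_mkseqP (R : realType) m N (f : nat -> 'cV[R]_m) :
  reflect (forall g : 'I_N -> R, \sum_(i < N) g i *: f i = 0 -> forall i, g i = 0)
          (free (mkseq f N)).
Proof.
have sz : size (mkseq f N) == N by rewrite size_mkseq.
have -> : free (mkseq f N) = free (Tuple sz) by [].
apply: (iffP freeP) => H g hg i; apply: H; rewrite -[RHS]hg;
  apply: eq_bigr => j _; by rewrite /= nth_mkseq.
Qed.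

Lemma dep_coeffs (R : realType) m N (f : nat -> 'cV[R]_m) :
  ~~ free (mkseq f N) ->
  exists g : 'I_N -> R, (exists i, g i != 0) /\ \sum_(i < N) g i *: f i = 0.
Proof.
move=> nf; apply: NNPP => H; move/negP: nf; apply; apply/free_mkseqP => g hg i.
apply: NNPP => gi; apply: H; exists g; split => //; exists i; exact/eqP.
Qed.

Definition Mmat (R : realType) n m k (P : nat -> 'I_m -> {mpoly R[n]}) (S : 'I_k -> 'I_m)
  : 'M[{mpoly R[n]}]_(k, k.+1) := \matrix_(a, i) P i (S a).

Definition cofp (R : realType) n m k (P : nat -> 'I_m -> {mpoly R[n]}) (S : 'I_k -> 'I_m)
  (i : 'I_k.+1) : {mpoly R[n]} := (-1) ^+ i * \det (col' i (Mmat P S)).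

Lemma peval_det (R : realType) n k (A : 'M[{mpoly R[n]}]_k) X :
  peval (\det A) X = \det (map_mx (fun p => peval p X) A).
Proof. by rewrite /peval -(det_map_mx (meval (fun i => X i 0))). Qed.

Lemma ker_rel (R : realType) n m (Rs : nat -> 'cV[R]_n -> 'cV[R]_m) k
  (P : nat -> 'I_m -> {mpoly R[n]}) (S : 'I_k -> 'I_m) :
  (forall i X j, Rs i X j 0 = peval (P i j) X) ->
  (forall X, dep_upto Rs k X) ->
  forall X, \sum_(i < k.+1) peval (cofp P S i) X *: Rs i X = 0.
Proof.
move=> HP Hdep X.
have [g [[i0 gi0] hg]] := dep_coeffs (Hdep X).
apply/matrixP => j z; rewrite ord1 summxE !mxE.
pose N : 'M[R]_k.+1 := \matrix_(r, i) (if unlift ord0 r is Some a then Rs i X (S a) 0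
   else Rs i X j 0).
have dN : \det N = 0.
  apply/eqP; apply: contraT => dN.
  have := @det_inj _ _ N (\col_i g i) dN.
  have -> : N *m (\col_i g i) = 0.
    apply/matrixP => r z'; rewrite ord1 !mxE.
    have := congr1 (fun M : 'cV[R]_m => M (if unlift ord0 r is Some a then S a else j) 0) hg.
    rewrite summxE mxE => e; rewrite -[RHS]e; apply: eq_bigr => i _.
    rewrite !mxE.
    by case: (unlift ord0 r) => [a|]; rewrite mulrC.
  move=> /(_ erefl) /matrixP /(_ i0 0); rewrite !mxE => gi.
  by move: gi0; rewrite gi eqxx.
rewrite -[RHS]dN (expand_det_row N ord0); apply: eq_bigr => i _.
rewrite !mxE mulrC; congr (_ * _).
  by rewrite unlift_none.
rewrite /cofactor /cofp add0n /peval rmorphM rmorphXn rmorphN1 /=; congr (_ * _).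
rewrite -/(peval _ X) peval_det; congr (\det _).
apply/matrixP => a b; rewrite !mxE liftK -HP.
by [].
Qed.

Lemma step1 (R : realType) n m (Rs : nat -> 'cV[R]_n -> 'cV[R]_m) k
  (c : 'I_k -> 'cV[R]_n -> R) (d : 'cV[R]_n -> R) (rF : 'M[R]_m) (Fi : 'M[R]_n) :
  (forall X, \sum_(i < k) c i X *: Rs i X + d X *: Rs k X = 0) ->
  (forall X, \sum_(i < k) c i X *: Rs i.+1 X + d X *: Rs k.+1 X = 0) ->
  (forall X (g : 'I_k -> R), d X != 0 -> \sum_(i < k) g i *: Rs i X = 0 -> forall i, g i = 0) ->
  (forall i X, (i <= k)%N -> rF *m Rs i (Fi *m X) = Rs i X) ->
  forall X, (d X * d (Fi *m X)) *: (rF *m Rs k.+1 (Fi *m X) - Rs k.+1 X) = 0.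
Proof.
move=> rel0 rel1 ind stab X.
set Y := Fi *m X.
have [->|dX0] := eqVneq (d X) 0; first by rewrite mul0r scale0r.
have r0Y : \sum_(i < k) c i Y *: Rs i X + d Y *: Rs k X = 0.
  have := congr1 (mulmx rF) (rel0 Y); rewrite mulmxDr mulmx_sumr mulmx0 => e; rewrite -[RHS]e.
  congr (_ + _); last by rewrite -scalemxAr stab.
  by apply: eq_bigr => i _; rewrite -scalemxAr stab // ltnW.
have r1Y : \sum_(i < k) c i Y *: Rs i.+1 X + d Y *: (rF *m Rs k.+1 Y) = 0.
  have := congr1 (mulmx rF) (rel1 Y); rewrite mulmxDr mulmx_sumr mulmx0 => e; rewrite -[RHS]e.
  congr (_ + _); last by rewrite -scalemxAr.
  by apply: eq_bigr => i _; rewrite -scalemxAr stab.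
pose g i := d Y * c i X - d X * c i Y.
have e0X : \sum_(i < k) c i X *: Rs i X = - (d X *: Rs k X) by apply/eqP; rewrite -addr_eq0 rel0.
have e0Y : \sum_(i < k) c i Y *: Rs i X = - (d Y *: Rs k X) by apply/eqP; rewrite -addr_eq0 r0Y.
have e1X : \sum_(i < k) c i X *: Rs i.+1 X = - (d X *: Rs k.+1 X) by apply/eqP; rewrite -addr_eq0 rel1.
have e1Y : \sum_(i < k) c i Y *: Rs i.+1 X = - (d Y *: (rF *m Rs k.+1 Y)) by apply/eqP; rewrite -addr_eq0 r1Y.
have g0 : forall i, g i = 0.
  apply: ind dX0 _.
  rewrite /g; under eq_bigr do rewrite scalerBl -!scalerA.
  rewrite sumrB -!scaler_sumr e0X e0Y !scalerN !scalerA mulrC opprK.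
  by rewrite addrC subrr.
rewrite -[RHS](_ : \sum_(i < k) g i *: Rs i.+1 X = 0); last first.
  by apply: big1 => i _; rewrite g0 scale0r.
rewrite /g; under eq_bigr do rewrite scalerBl -!scalerA.
rewrite sumrB -!scaler_sumr e1X e1Y !scalerN !scalerA opprK scalerBr.
by rewrite (mulrC (d Y)) addrC.
Qed.

Lemma lp_line (R : realType) n (D : {mpoly R[n]}) (a b : 'cV[R]_n) (Fi : 'M[R]_n) t :
  (lp D (Fi *m a) (Fi *m b)).[t] = peval D (Fi *m (a + t *: b)).
Proof. by rewrite lpE mulmxDr scalemxAr. Qed.

Lemma dens (R : realType) n (D : {mpoly R[n]}) (Fi : 'M[R]_n) (G : 'cV[R]_n -> R) Z :
  (forall X, peval D X * peval D (Fi *m X) * G X = 0) ->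
  (forall a b, exists q : {poly R}, forall t, G (a + t *: b) = q.[t]) ->
  peval D Z * peval D (Fi *m Z) != 0 ->
  forall X, G X = 0.
Proof.
move=> H Hl HZ X.
have [q hq] := Hl X (Z - X).
pose h := lp D X (Z - X) * lp D (Fi *m X) (Fi *m (Z - X)).
have hE t : h.[t] = peval D (X + t *: (Z - X)) * peval D (Fi *m (X + t *: (Z - X))).
  by rewrite hornerM lpE lp_line.
have h0 : h != 0.
  apply: contra HZ => /eqP h0; have := hE 1; rewrite h0 horner0 scale1r.
  by rewrite addrC subrK => <-.
have hq0 : h * q = 0.
  by apply: poly_zero_fun => t; rewrite hornerM hE -hq H.
have : q = 0 by move/eqP: hq0; rewrite mulf_eq0 (negbTE h0) => /eqP.
by move=> q0; have := hq 0; rewrite q0 horner0 scale0r addr0.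
Qed.

Lemma find_Z (R : realType) n (D : {mpoly R[n]}) (F : 'M[R]_n) X0 :
  F \in unitmx -> peval D X0 != 0 ->
  exists Z, peval D Z * peval D (invmx F *m Z) != 0.
Proof.
move=> uF dX0.
pose b := F *m X0 - X0.
pose g := lp D X0 b * lp D (invmx F *m X0) (invmx F *m b).
have g1 : lp D X0 b != 0.
  by apply: contra dX0 => /eqP e; have := lpE D X0 b 0; rewrite e horner0 scale0r addr0 => <-.
have g2 : lp D (invmx F *m X0) (invmx F *m b) != 0.
  apply: contra dX0 => /eqP e; have := lp_line D X0 b (invmx F) 1.
  by rewrite e horner0 scale1r /b addrC subrK mulKmx // => <-.
have gn : g != 0 by rewrite mulf_neq0.
apply: NNPP => H; move/eqP: gn; apply; apply: poly_zero_fun => t.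
apply: NNPP => gt; apply: H; exists (X0 + t *: b).
by rewrite -lp_line -lpE -hornerM; apply/eqP.
Qed.

Lemma cof_max_eval (R : realType) n m (Rs : nat -> 'cV[R]_n -> 'cV[R]_m) k
  (P : nat -> 'I_m -> {mpoly R[n]}) (S : 'I_k -> 'I_m) :
  (forall i X j, Rs i X j 0 = peval (P i j) X) ->
  forall X, peval (cofp P S ord_max) X = (-1) ^+ k * \det (\matrix_(a, i) Rs i X (S a) 0).
Proof.
move=> HP X.
rewrite /cofp /peval rmorphM rmorphXn rmorphN1 /=; congr (_ * _).
rewrite -/(peval _ X) peval_det; congr (\det _).
by apply/matrixP => a b; rewrite !mxE lift_max HP.
Qed.

Lemma indep_max (R : realType) n m (Rs : nat -> 'cV[R]_n -> 'cV[R]_m) k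
  (P : nat -> 'I_m -> {mpoly R[n]}) (S : 'I_k -> 'I_m) :
  (forall i X j, Rs i X j 0 = peval (P i j) X) ->
  forall X (g : 'I_k -> R), peval (cofp P S ord_max) X != 0 ->
    \sum_(i < k) g i *: Rs i X = 0 -> forall i, g i = 0.
Proof.
move=> HP X g; rewrite (cof_max_eval _ HP) mulf_eq0 negb_or => /andP [_ dQ] hg i.
have := @det_inj _ _ _ (\col_i g i) dQ.
have -> : (\matrix_(a, i) Rs i X (S a) 0) *m (\col_i g i) = 0.
  apply/matrixP => r z; rewrite ord1 !mxE.
  have := congr1 (fun M : 'cV[R]_m => M (S r) 0) hg.
  rewrite summxE mxE => e; rewrite -[RHS]e; apply: eq_bigr => j _.
  by rewrite !mxE mulrC.
by move=> /(_ erefl) /matrixP /(_ i 0); rewrite !mxE.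
Qed.

Theorem mainTheorem15 (R : realType) (n m : nat) (rho : 'M[R]_n -> 'M[R]_m)
  (Rs : nat -> 'cV[R]_n -> 'cV[R]_m) (k : nat) :
  is_rep rho ->
  (forall i, is_polyfun (Rs i)) ->
  deg_Pmin Rs k ->
  KernEval_is_ideal Rs ->
  forall F : 'M[R]_n, in_stab rho Rs k F <-> in_stab rho Rs k.+1 F.
Proof.
move=> _ Hpoly [Hdep Hmin] [_ [_ Hid]] F.
split; last first.
  by move=> [uF st]; split => // i hi; apply: st; rewrite ltnW.
move=> [uF st]; split => // i; rewrite leq_eqVlt => /orP [/eqP ei | hi]; last exact: st.
subst i.
have [P HP] : exists P : nat -> 'I_m -> {mpoly R[n]}, forall i X j, Rs i X j 0 = peval (P i j) X.
  exists (fun i => proj1_sig (constructive_indefinite_description _ (Hpoly i))).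
  move=> i0 X j; exact: (proj2_sig (constructive_indefinite_description _ (Hpoly i0))).
have [X0 fX0] : exists X0, free (mkseq (fun i => Rs i X0) k).
  case: k Hdep Hmin st => [|k'] Hdep Hmin st; first by exists 0; exact: nil_free.
  have := Hmin k' (ltnSn k'); move/not_all_ex_not => [X0 nd]; exists X0.
  by apply/negPn/negP.
pose A : 'M[R]_(m, k) := \matrix_(j, i) Rs i X0 j 0.
have rfA : row_free A^T.
  apply: inj_row_free => v hv; apply/matrixP => z i; rewrite ord1 mxE.
  move/free_mkseqP: fX0 => /(_ (fun i => v 0 i)); apply.
  apply/matrixP => j z'; rewrite ord1 summxE !mxE.
  have := congr1 (fun M : 'rV[R]_m => M 0 j) hv; rewrite !mxE => e; rewrite -[RHS]e.
  by apply: eq_bigr => l _; rewrite !mxE.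
have rkA : row_full A by rewrite /row_full -mxrank_tr.
pose S := fun a => fullrankfun rkA a.
have dX0 : peval (cofp P S ord_max) X0 != 0.
  rewrite (cof_max_eval _ HP) mulf_neq0 ?signr_eq0 //.
  have := fullrowsub_unit rkA; rewrite unitmxE unitfE.
  suff -> : rowsub (fullrankfun rkA) A = \matrix_(a, i) Rs i X0 (S a) 0 by [].
  by apply/matrixP => a b; rewrite !mxE.
pose p := \poly_(i < k.+1) cofp P S (inord i).
have Kp : in_KernEval Rs p.
  move=> X; rewrite (@EvalR_widen _ _ _ Rs p X k.+1 (size_poly _ _)).
  rewrite -[RHS](@ker_rel _ _ _ Rs k P S HP Hdep X); apply: eq_bigr => i _.
  by rewrite coef_poly ltn_ord inord_val.
have KXp := Hid 'X p Kp.
have rel0 : forall X, \sum_(i < k) peval (cofp P S (widen_ord (leqnSn k) i)) X *: Rs i X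
      + peval (cofp P S ord_max) X *: Rs k X = 0.
  by move=> X; rewrite -[RHS](@ker_rel _ _ _ Rs k P S HP Hdep X) big_ord_recr.
have rel1 : forall X, \sum_(i < k) peval (cofp P S (widen_ord (leqnSn k) i)) X *: Rs i.+1 X
      + peval (cofp P S ord_max) X *: Rs k.+1 X = 0.
  move=> X; rewrite -[RHS](KXp X) (@EvalR_widen _ _ _ Rs _ X k.+2); last first.
    apply: leq_trans (size_polyMleq _ _) _; rewrite size_polyX /=.
    exact: size_poly.
  rewrite big_ord_recl coefXM /= /peval meval0 scale0r add0r.
  have bump0 : forall i, bump 0 i = i.+1 by [].
  have cX : forall i : 'I_k.+1, ('X * p)`_(bump 0 i) = cofp P S i.
    by move=> i; rewrite bump0 coefXM /= coef_poly ltn_ord inord_val.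
  under [RHS]eq_bigr do rewrite cX bump0.
  by rewrite big_ord_recr.
have stab : forall i X, (i <= k)%N -> rho F *m Rs i (invmx F *m X) = Rs i X.
  by move=> i X hi; have := st i hi; move/(congr1 (fun f => f X)).
have S1 := step1 rel0 rel1 (indep_max HP) stab.
have [Z hZ] := find_Z uF dX0.
apply: functional_extensionality => X; apply/matrixP => j z; rewrite ord1.
apply/eqP; rewrite -subr_eq0; apply/eqP; move: X.
apply: (dens (G := fun X => (actGL rho F (Rs k.+1) X) j 0 - Rs k.+1 X j 0) _ _ hZ).
  move=> X; have := congr1 (fun M : 'cV[R]_m => M j 0) (S1 X).
  by rewrite !mxE.
move=> a b.
exists (\sum_l rho F j l *: lp (P k.+1 l) (invmx F *m a) (invmx F *m b) - lp (P k.+1 j) a b).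
move=> t; rewrite hornerD hornerN horner_sum lpE -HP /actGL !mxE; congr (_ - _).
apply: eq_bigr => l _; rewrite hornerZ lp_line HP.
by [].
Qed.
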